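(* Let $R$ be a commutative ring and $\mathfrak{a}\subseteq R$ an ideal. (a) If $\mathfrak{a}$ is nilpotent, then $\Gamma_\mathfrak{a}=\overline{\Gamma}_\mathfrak{a}$ commutes with inductive limits (all small colimits). (b) If $\mathfrak{a}$ is nil, then $\overline{\Gamma}_\mathfrak{a}$ commutes with inductive limits; but there exist a commutative ring $R$ and a nil ideal $\mathfrak{a}$ such that $\Gamma_\mathfrak{a}$ does not commute with filtered inductive limits. (c) If some power $\mathfrak{a}^n$ ($n\geq1$) is finitely generated, then $\Gamma_\mathfrak{a}=\overline{\Gamma}_\mathfrak{a}$ commutes with filtered inductive limits. (d) If $R$ is noetherian, then $\Gamma_\mathfrak{a}=\overline{\Gamma}_\mathfrak{a}$ commutes with filtered inductive limits; but for $R=\mathbb{Z}$, $\mathfrak{a}=2\mathbb{Z}$, it does not commute with all inductive limits (it is not right exact).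
   Context: $\Gamma_\mathfrak{a}(M)=\{x\in M\mid \exists n\in\mathbb{N}:\mathfrak{a}^n\subseteq(0:_Rx)\}$, $\overline{\Gamma}_\mathfrak{a}(M)=\{x\in M\mid \mathfrak{a}\subseteq\sqrt{(0:_Rx)}\}$. Nil: every element of $\mathfrak{a}$ is nilpotent. *)

(* Defs.v *)
From HB Require Import structures.
From mathcomp Require Import all_boot all_algebra.
From Stdlib Require Import ClassicalEpsilon.
Set Implicit Arguments. Unset Strict Implicit. Unset Printing Implicit Defensive.
Import GRing.Theory.
Local Open Scope ring_scope.

Definition pb (P : Prop) : bool :=
  if excluded_middle_informative P then true else false.
Lemma pbP (P : Prop) : reflect P (pb P).
Proof. rewrite /pb; case: excluded_middle_informative => h; by constructor. Qed.

Section Ideals.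
Variable R : comPzRingType.

Definition is_ideal (a : R -> Prop) : Prop :=
  [/\ a 0, (forall x y, a x -> a y -> a (x + y)) & (forall r x, a x -> a (r * x))].

Fixpoint ideal_pow (a : R -> Prop) (n : nat) : R -> Prop :=
  match n with
  | 0%N => fun _ => True
  | n'.+1 => fun x => exists s : seq (R * R),
       (forall p, List.In p s -> a p.1 /\ ideal_pow a n' p.2) /\
       x = \sum_(p <- s) p.1 * p.2
  end.

Definition gen_ideal (g : seq R) : R -> Prop :=
  fun x => exists c : 'I_(size g) -> R, x = \sum_(i < size g) c i * g`_i.

Definition finitely_generated (a : R -> Prop) : Prop :=
  exists g : seq R, forall x, a x <-> gen_ideal g x.

Definition nilpotent_ideal (a : R -> Prop) : Prop :=
  exists n : nat, forall r, ideal_pow a n r -> r = 0.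

Definition nil_ideal (a : R -> Prop) : Prop :=
  forall r, a r -> exists n : nat, r ^+ n = 0.

Definition noetherian : Prop :=
  forall a : R -> Prop, is_ideal a -> finitely_generated a.

End Ideals.

Section Torsion.
Variables (R : comPzRingType) (a : R -> Prop).

Definition Gamma (M : lmodType R) (x : M) : Prop :=
  exists n : nat, forall r, ideal_pow a n r -> r *: x = 0.

(* bar Gamma_a(M) = { x | a \subseteq sqrt (0 :_R x) } *)
Definition Gammabar (M : lmodType R) (x : M) : Prop :=
  forall r, a r -> exists n : nat, r ^+ n *: x = 0.

End Torsion.

Record cat := Cat {
  cob :> Type;
  chom : cob -> cob -> Type;
  cid : forall i, chom i i;
  ccomp : forall i j k, chom j k -> chom i j -> chom i k;
  ccomp_id_l : forall i j (f : chom i j), ccomp (cid j) f = f;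
  ccomp_id_r : forall i j (f : chom i j), ccomp f (cid i) = f;
  ccomp_assoc : forall i j k l (h : chom k l) (g : chom j k) (f : chom i j),
      ccomp h (ccomp g f) = ccomp (ccomp h g) f }.

Definition filtered (C : cat) : Prop :=
  [/\ inhabited (cob C),
      (forall i j : C, exists k : C, inhabited (chom i k) /\ inhabited (chom j k)) &
      (forall (i j : C) (f g : chom i j), exists (k : C) (h : chom j k),
           ccomp h f = ccomp h g)].

Section Diagrams.
Variable R : pzRingType.

Record diagram (C : cat) := Diagram {
  dobj : C -> lmodType R;
  dmap : forall i j, chom i j -> dobj i -> dobj j;
  dmap_lin : forall i j (f : chom i j), linear (dmap f);
  dmap_id : forall i (x : dobj i), dmap (cid i) x = x;
  dmap_comp : forall i j k (g : chom j k) (f : chom i j) (x : dobj i),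
      dmap (ccomp g f) x = dmap g (dmap f x) }.

Record cocone (C : cat) (D : diagram C) := Cocone {
  apex : lmodType R;
  leg : forall i, dobj D i -> apex;
  leg_lin : forall i, linear (fun x : dobj D i => leg x);
  leg_comm : forall i j (f : chom i j) (x : dobj D i), leg (dmap f x) = leg x }.

Definition is_colimit (C : cat) (D : diagram C) (K : cocone D) : Prop :=
  forall K' : cocone D,
    (exists h : apex K -> apex K', linear h /\
        forall i (x : dobj D i), h (leg K x) = leg K' x) /\
    (forall h h' : apex K -> apex K', linear h -> linear h' ->
        (forall i (x : dobj D i), h (leg K x) = leg K' x) ->
        (forall i (x : dobj D i), h' (leg K x) = leg K' x) ->
        forall y, h y = h' y).

End Diagrams.

(* Subfunctors of the identity of R-Mod (given by a submodule-valued   *)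
(* predicate stable under linear maps), and their action on diagrams.  *)
Unset Implicit Arguments.
Record subfun (R : pzRingType) := SubFun {
  sf_pred :> forall M : lmodType R, M -> Prop;
  sf_0 : forall M : lmodType R, sf_pred M 0;
  sf_add : forall (M : lmodType R) (x y : M), sf_pred M x -> sf_pred M y -> sf_pred M (x + y);
  sf_scale : forall (M : lmodType R) (c : R) (x : M), sf_pred M x -> sf_pred M (c *: x);
  sf_map : forall (M N : lmodType R) (f : M -> N), linear f ->
      forall x, sf_pred M x -> sf_pred N (f x) }.

Set Implicit Arguments.
Arguments sf_pred {R} s M x : rename.

Section SubModule.
Variables (R : pzRingType) (F : subfun R) (M : lmodType R).

Definition sfp : pred M := fun x => pb (F M x).

Lemma sfp_closed : subsemimod_closed sfp.
Proof.
split; [split|].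
- by apply/pbP; apply: sf_0.
- by move=> x y /pbP hx /pbP hy; apply/pbP; apply: sf_add.
- by move=> c x /pbP hx; apply/pbP; apply: sf_scale.
Qed.

HB.instance Definition _ := GRing.isSubmodClosed.Build R M sfp sfp_closed.

Record sft := SFT { sfval : M; sfvalP : sfp sfval }.
HB.instance Definition _ := [isSub for sfval].
HB.instance Definition _ := [Choice of sft by <:].
HB.instance Definition _ := [SubChoice_isSubLmodule of sft by <:].

End SubModule.

Lemma lin0 (R : pzRingType) (M N : lmodType R) (f : M -> N) :
  linear f -> f 0 = 0.
Proof.
move=> fl; have := fl 1 0 0; rewrite scale1r addr0 scale1r => h.
by apply: (addrI (f 0)); rewrite addr0 -h.
Qed.

Lemma linZ (R : pzRingType) (M N : lmodType R) (f : M -> N) :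
  linear f -> forall c x, f (c *: x) = c *: f x.
Proof. by move=> fl c x; have := fl c x 0; rewrite !addr0 (lin0 fl) addr0. Qed.

Lemma linD (R : pzRingType) (M N : lmodType R) (f : M -> N) :
  linear f -> forall x y, f (x + y) = f x + f y.
Proof. by move=> fl x y; have := fl 1 x y; rewrite !scale1r. Qed.

Section SubFunctorAction.
Variables (R : pzRingType) (F : subfun R).

Definition sfmap (M N : lmodType R) (f : M -> N) (fl : linear f) (x : sft F M) :
  sft F N := @SFT _ F N (f (sfval x))
     (introT (pbP _) (sf_map _ F M N f fl _ (elimT (pbP _) (sfvalP x)))).

Lemma sfmap_lin (M N : lmodType R) (f : M -> N) (fl : linear f) :
  linear (sfmap fl).
Proof. by move=> c x y; apply: val_inj => /=; apply: fl. Qed.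

Definition sf_diagram (C : cat) (D : diagram R C) : diagram R C.
Proof.
refine (@Diagram R C (fun i => sft F (dobj D i))
   (fun i j f => sfmap (@dmap_lin _ _ D i j f)) (fun i j f => sfmap_lin _) _ _).
- by move=> i x; apply: val_inj => /=; apply: dmap_id.
- by move=> i j k g f x; apply: val_inj => /=; apply: dmap_comp.
Defined.

Definition sf_cocone (C : cat) (D : diagram R C) (K : cocone D) :
  cocone (sf_diagram D).
Proof.
refine (@Cocone R C (sf_diagram D) (sft F (apex K))
   (fun i => sfmap (@leg_lin _ _ D K i)) (fun i => sfmap_lin _) _).
by move=> i j f x; apply: val_inj => /=; apply: leg_comm.
Defined.

Definition commutes_with_colimits : Prop :=
  forall (C : cat) (D : diagram R C) (K : cocone D),
    is_colimit K -> is_colimit (sf_cocone K).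

Definition commutes_with_filtered_colimits : Prop :=
  forall (C : cat), filtered C -> forall (D : diagram R C) (K : cocone D),
    is_colimit K -> is_colimit (sf_cocone K).

End SubFunctorAction.

Section TorsionFunctors.
Variables (R : comPzRingType) (a : R -> Prop).

Lemma ideal_pow_ideal (ha : is_ideal a) n : is_ideal (ideal_pow a n).
Proof.
case: ha => a0 aD aM; elim: n => [|n [p0 pD pM]] //=.
split.
- by exists [::]; split => //; rewrite big_nil.
- move=> x y [s [hs ->]] [t [ht ->]]; exists (s ++ t); split; last by rewrite big_cat.
  by move=> p hp; case: (List.in_app_or _ _ _ hp) => [/hs|/ht].
- move=> r x [s [hs ->]]; exists [seq (r * p.1, p.2) | p <- s]; split.
    move=> p hp; case: (proj1 (List.in_map_iff _ _ _) hp) => q [<- /hs [hq1 hq2]]; split => //; exact: aM.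
  by rewrite big_map mulr_sumr; apply: eq_bigr => p _; rewrite mulrA.
Qed.

Lemma ideal_pow_S (ha : is_ideal a) n r : ideal_pow a n.+1 r -> ideal_pow a n r.
Proof.
case: (ideal_pow_ideal ha n) => p0 pD pM.
case=> s [hs ->]; elim: s hs => [|p s IH] hs; first by rewrite big_nil.
rewrite big_cons; apply: pD; last by apply: IH => q hq; apply: hs; right.
by case: (hs p (or_introl erefl)) => _ h2; apply: pM.
Qed.

Lemma ideal_pow_le (ha : is_ideal a) m n r :
  (m <= n)%N -> ideal_pow a n r -> ideal_pow a m r.
Proof.
move/subnKC <-; elim: (n - m)%N => [|k IH]; first by rewrite addn0.
by rewrite addnS => /ideal_pow_S -/(_ ha) /IH.
Qed.

Definition Gamma_sf (ha : is_ideal a) : subfun R.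
Proof.
refine (@SubFun R (fun M x => @Gamma R a M x) _ _ _ _).
- by move=> M; exists 0%N => r _; rewrite scaler0.
- move=> M x y [m hm] [n hn]; exists (maxn m n) => r hr.
  rewrite scalerDr hm ?hn ?add0r //.
    exact: (ideal_pow_le ha (leq_maxr m n) hr).
  exact: (ideal_pow_le ha (leq_maxl m n) hr).
- move=> M c x [n hn]; exists n => r hr.
  by rewrite scalerA mulrC -scalerA hn // scaler0.
- move=> M N f fl x [n hn]; exists n => r hr.
  by rewrite -(linZ fl) hn // (lin0 fl).
Defined.

Definition Gammabar_sf : subfun R.
Proof.
refine (@SubFun R (fun M x => @Gammabar R a M x) _ _ _ _).
- by move=> M r _; exists 0%N; rewrite scaler0.
- move=> M x y hx hy r ar; case: (hx r ar) => m hm; case: (hy r ar) => n hn.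
  exists (m + n)%N; rewrite scalerDr exprD -!scalerA hn scaler0.
  by rewrite scalerA mulrC -scalerA hm scaler0 addr0.
- move=> M c x hx r ar; case: (hx r ar) => n hn; exists n.
  by rewrite scalerA mulrC -scalerA hn scaler0.
- move=> M N f fl x hx r ar; case: (hx r ar) => n hn; exists n.
  by rewrite -(linZ fl) hn (lin0 fl).
Defined.

End TorsionFunctors.

Definition two_Z : int -> Prop := fun x => (2 %| x)%Z.

Lemma two_Z_ideal : is_ideal two_Z.
Proof.
split; rewrite /two_Z.
- exact: dvdz0.
- by move=> x y hx hy; apply: rpredD.
- by move=> r x hx; rewrite dvdz_mull.
Qed.

(* Main.v *)
Require Import Defs.
From HB Require Import structures.
From mathcomp Require Import all_boot all_algebra.
From mathcomp Require Import boolp zify.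
From Stdlib Require Import ClassicalEpsilon FunctionalExtensionality.
Import GRing.Theory.
Local Open Scope ring_scope.
Set Implicit Arguments. Unset Strict Implicit. Unset Printing Implicit Defensive.

Section Quot.
Variables (R : pzRingType) (T : Type) (E : T -> T -> Prop).
Hypothesis Erefl : forall p, E p p.
Hypothesis Esym : forall p q, E p q -> E q p.
Hypothesis Etrans : forall p q r, E p q -> E q r -> E p r.
Variables (padd : T -> T -> T) (popp : T -> T) (pscale : R -> T -> T) (pz : T).
Hypothesis Eadd : forall p p' q q', E p p' -> E q q' -> E (padd p q) (padd p' q').
Hypothesis Eopp : forall p p', E p p' -> E (popp p) (popp p').
Hypothesis Escale : forall c p p', E p p' -> E (pscale c p) (pscale c p').
Hypothesis EaddA : forall p q r, E (padd p (padd q r)) (padd (padd p q) r).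
Hypothesis EaddC : forall p q, E (padd p q) (padd q p).
Hypothesis Eadd0 : forall p, E (padd pz p) p.
Hypothesis EaddN : forall p, E (padd (popp p) p) pz.
Hypothesis EscaleA : forall a b p, E (pscale a (pscale b p)) (pscale (a * b) p).
Hypothesis Escale1 : forall p, E (pscale 1 p) p.
Hypothesis EscaleDr : forall a p q, E (pscale a (padd p q)) (padd (pscale a p) (pscale a q)).
Hypothesis EscaleDl : forall a b p, E (pscale (a + b) p) (padd (pscale a p) (pscale b p)).

Definition Qt := {P : T -> Prop | exists x, P = E x}.
HB.instance Definition _ := gen_eqMixin Qt.
HB.instance Definition _ := gen_choiceMixin Qt.

Definition cls (x : T) : Qt := exist _ (E x) (ex_intro _ x erefl).

Lemma clsP x y : cls x = cls y <-> E x y.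
Proof.
split.
  by move/(congr1 sval) => /= h; have := Erefl y; rewrite -h.
move=> hxy; apply: eq_exist_uncurried.
have e : E x = E y.
  apply: funext => z; apply: propext; split; first by move/(Etrans (Esym hxy)).
  by move/(Etrans hxy).
exists e; exact: Prop_irrelevance.
Qed.

Definition rep (q : Qt) : T := proj1_sig (constructive_indefinite_description _ (proj2_sig q)).

Lemma repK q : cls (rep q) = q.
Proof.
rewrite /rep; case: constructive_indefinite_description => x /= hx.
case: q hx => P hP /= hx; subst P; congr exist; exact: Prop_irrelevance.
Qed.

Lemma cls_surj (P : Qt -> Prop) : (forall x, P (cls x)) -> forall q, P q.
Proof. by move=> h q; rewrite -(repK q). Qed.

Definition qadd (a b : Qt) := cls (padd (rep a) (rep b)).
Definition qopp (a : Qt) := cls (popp (rep a)).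
Definition qscale c (a : Qt) := cls (pscale c (rep a)).
Definition qz := cls pz.

Lemma repE x : E (rep (cls x)) x.
Proof. by apply/clsP; rewrite repK. Qed.

Lemma qaddE x y : qadd (cls x) (cls y) = cls (padd x y).
Proof. by apply/clsP; apply: Eadd; apply: repE. Qed.
Lemma qoppE x : qopp (cls x) = cls (popp x).
Proof. by apply/clsP; apply: Eopp; apply: repE. Qed.
Lemma qscaleE c x : qscale c (cls x) = cls (pscale c x).
Proof. by apply/clsP; apply: Escale; apply: repE. Qed.

Lemma qaddA : associative qadd.
Proof.
elim/cls_surj => x; elim/cls_surj => y; elim/cls_surj => z.
by rewrite !qaddE; apply/clsP.
Qed.
Lemma qaddC : commutative qadd.
Proof. by elim/cls_surj => x; elim/cls_surj => y; rewrite !qaddE; apply/clsP. Qed.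
Lemma qadd0 : left_id qz qadd.
Proof. by elim/cls_surj => x; rewrite qaddE; apply/clsP. Qed.
Lemma qaddN : left_inverse qz qopp qadd.
Proof. by elim/cls_surj => x; rewrite qoppE qaddE; apply/clsP. Qed.

HB.instance Definition _ := GRing.isZmodule.Build Qt qaddA qaddC qadd0 qaddN.

Lemma qaddD (u v : Qt) : u + v = qadd u v. Proof. by []. Qed.

Lemma qscaleA a b v : qscale a (qscale b v) = qscale (a * b) v.
Proof. by elim/cls_surj: v => x; rewrite !qscaleE; apply/clsP. Qed.
Lemma qscale1 : left_id 1 qscale.
Proof. by elim/cls_surj => x; rewrite !qscaleE; apply/clsP. Qed.
Lemma qscaleDr : right_distributive qscale +%R.
Proof.
move=> a; elim/cls_surj => x; elim/cls_surj => y.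
by rewrite !qaddD (qaddE x y) !qscaleE (qaddE (pscale a x)); apply/clsP.
Qed.
Lemma qscaleDl v : {morph qscale^~ v: a b / a + b}.
Proof.
elim/cls_surj: v => x a b.
by rewrite qaddD !qscaleE qaddE; apply/clsP.
Qed.

HB.instance Definition _ := GRing.Zmodule_isLmodule.Build R Qt qscaleA qscale1 qscaleDr qscaleDl.

Definition QM : lmodType R := Qt.

Lemma clsD x y : (cls x : QM) + cls y = cls (padd x y).
Proof. exact: qaddE. Qed.
Lemma clsZ c x : c *: (cls x : QM) = cls (pscale c x).
Proof. exact: qscaleE. Qed.
Lemma cls0 : (0 : QM) = cls pz.
Proof. by []. Qed.

End Quot.

Lemma linN (R : pzRingType) (M N : lmodType R) (f : M -> N) :
  linear f -> forall x, f (- x) = - f x.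
Proof. by move=> fl x; rewrite -scaleN1r (linZ fl) scaleN1r. Qed.

Section Filt.
Variables (R : pzRingType) (C : Defs.cat) (hC : filtered C) (D : diagram R C).

Lemma ex_cup (i j : C) : exists k : C, inhabited (chom i k) /\ inhabited (chom j k).
Proof. by case: hC => _ h _; apply: h. Qed.

Definition cup (i j : C) : C := proj1_sig (constructive_indefinite_description _ (ex_cup i j)).
Definition cupl (i j : C) : chom i (cup i j) :=
  epsilon (proj1 (proj2_sig (constructive_indefinite_description _ (ex_cup i j)))) (fun _ => True).
Definition cupr (i j : C) : chom j (cup i j) :=
  epsilon (proj2 (proj2_sig (constructive_indefinite_description _ (ex_cup i j)))) (fun _ => True).

Lemma coeq (i j : C) (f g : chom i j) : exists (k : C) (h : chom j k), ccomp h f = ccomp h g.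
Proof. by case: hC => _ _ h; apply: h. Qed.

Definition i0 : C := epsilon (let: And3 h _ _ := hC in h) (fun _ => True).

Local Notation dm f x := (@dmap R C D _ _ f x).

Definition Pt := {i : C & dobj D i}.
Definition mk (i : C) (x : dobj D i) : Pt := existT _ i x.

Definition equ (p q : Pt) : Prop :=
  exists (k : C) (f : chom (tag p) k) (g : chom (tag q) k), dm f (tagged p) = dm g (tagged q).

Lemma dlinD i j (f : chom i j) (x y : dobj D i) : dmap f (x + y) = dmap f x + dmap f y.
Proof. exact: linD (dmap_lin f) x y. Qed.
Lemma dlinZ i j (f : chom i j) c (x : dobj D i) : dmap f (c *: x) = c *: dmap f x.
Proof. exact: linZ (dmap_lin f) c x. Qed.
Lemma dlin0 i j (f : chom i j) : dm f (0 : dobj D i) = 0.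
Proof. exact: lin0 (dmap_lin f). Qed.
Lemma dlinN i j (f : chom i j) (x : dobj D i) : dmap f (- x) = - dmap f x.
Proof. exact: linN (dmap_lin f) x. Qed.

Lemma coeqE (i j : C) (f g : chom i j) :
  exists (k : C) (h : chom j k), forall x : dobj D i, dmap h (dmap f x) = dmap h (dmap g x).
Proof.
case: (coeq f g) => k [h e]; exists k, h => x.
by rewrite -!dmap_comp e.
Qed.

Lemma cupE (i j : C) : exists k (u : chom i k) (v : chom j k), True.
Proof. by exists (cup i j), (cupl i j), (cupr i j). Qed.

Lemma equ_refl p : equ p p.
Proof. by exists (tag p), (Defs.cid _), (Defs.cid _). Qed.

Lemma equ_sym p q : equ p q -> equ q p.
Proof. by case=> k [f [g e]]; exists k, g, f. Qed.

Lemma equ_trans p q r : equ p q -> equ q r -> equ p r.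
Proof.
case=> k [f [g e]] [l [f' [g' e']]].
case: (cupE k l) => m [u [v _]].
case: (coeqE (ccomp u g) (ccomp v f')) => n [w ew].
exists n, (ccomp w (ccomp u f)), (ccomp w (ccomp v g')).
rewrite !dmap_comp e -e'.
by have := ew (tagged q); rewrite !dmap_comp.
Qed.

Lemma equ_map i k (f : chom i k) (x : dobj D i) : equ (mk x) (mk (dmap f x)).
Proof. by exists k, f, (Defs.cid k); rewrite dmap_id. Qed.

Lemma equ0 i j : equ (mk (0 : dobj D i)) (mk (0 : dobj D j)).
Proof.
case: (cupE i j) => m [u [v _]]; exists m, u, v; by rewrite /= !dlin0.
Qed.

Definition padd (p q : Pt) : Pt :=
  mk (dmap (cupl (tag p) (tag q)) (tagged p) + dmap (cupr (tag p) (tag q)) (tagged q)).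
Definition popp (p : Pt) : Pt := mk (- tagged p).
Definition pscale (c : R) (p : Pt) : Pt := mk (c *: tagged p).
Definition pz : Pt := mk (0 : dobj D i0).

Lemma equ_add_any p q k (f : chom (tag p) k) (g : chom (tag q) k) :
  equ (padd p q) (mk (dmap f (tagged p) + dmap g (tagged q))).
Proof.
rewrite /padd; set f0 := cupl _ _; set g0 := cupr _ _.
case: (cupE (cup (tag p) (tag q)) k) => m [u [v _]].
case: (coeqE (ccomp u f0) (ccomp v f)) => n1 [w1 e1].
case: (coeqE (ccomp w1 (ccomp u g0)) (ccomp w1 (ccomp v g))) => n2 [w2 e2].
exists n2, (ccomp w2 (ccomp w1 u)), (ccomp w2 (ccomp w1 v)).
rewrite /= !dmap_comp !dlinD; congr (_ + _).
  by have := e1 (tagged p); rewrite !dmap_comp => ->.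
by have := e2 (tagged q); rewrite !dmap_comp.
Qed.

Lemma Eadd p p' q q' : equ p p' -> equ q q' -> equ (padd p q) (padd p' q').
Proof.
case=> k [f [f' e]] [l [g [g' e']]].
case: (cupE k l) => m [u [v _]].
apply: equ_trans (equ_add_any (ccomp u f) (ccomp v g)) _.
apply: equ_sym; apply: equ_trans (equ_add_any (ccomp u f') (ccomp v g')) _.
by rewrite !dmap_comp e e'; apply: equ_refl.
Qed.

Lemma Eopp p p' : equ p p' -> equ (popp p) (popp p').
Proof. by case=> k [f [f' e]]; exists k, f, f'; rewrite /= !dlinN e. Qed.

Lemma Escale c p p' : equ p p' -> equ (pscale c p) (pscale c p').
Proof. by case=> k [f [f' e]]; exists k, f, f'; rewrite /= !dlinZ e. Qed.

Lemma EaddA p q r : equ (padd p (padd q r)) (padd (padd p q) r).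
Proof.
pose k1 := cup (tag p) (tag q); pose k := cup k1 (tag r).
pose a := ccomp (cupl k1 (tag r)) (cupl (tag p) (tag q)).
pose b := ccomp (cupl k1 (tag r)) (cupr (tag p) (tag q)).
pose c := cupr k1 (tag r).
have H1 : equ (padd q r) (mk (dmap b (tagged q) + dmap c (tagged r))) by apply: equ_add_any.
apply: equ_trans (Eadd (equ_refl p) H1) _.
apply: equ_trans (@equ_add_any p (mk (dm b (tagged q) + dm c (tagged r))) _ a (Defs.cid k)) _.
apply: equ_sym; apply: equ_trans (@equ_add_any (padd p q) r _ (cupl k1 (tag r)) c) _.
rewrite /= dmap_id dlinD !dmap_comp addrA; exact: equ_refl.
Qed.

Lemma EaddC p q : equ (padd p q) (padd q p).
Proof.
apply: equ_trans (equ_add_any (cupl (tag p) (tag q)) (cupr (tag p) (tag q))) _.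
apply: equ_sym; apply: equ_trans (equ_add_any (cupr (tag p) (tag q)) (cupl (tag p) (tag q))) _.
rewrite addrC; exact: equ_refl.
Qed.

Lemma Eadd0 p : equ (padd pz p) p.
Proof.
rewrite {1}/padd /= dlin0 add0r; apply: equ_sym; exact: equ_map.
Qed.

Lemma EaddN p : equ (padd (popp p) p) pz.
Proof.
apply: equ_trans (@equ_add_any (popp p) p _ (Defs.cid (tag p)) (Defs.cid (tag p))) _.
rewrite !dmap_id /= addNr; exact: equ0.
Qed.

Lemma EscaleA a b p : equ (pscale a (pscale b p)) (pscale (a * b) p).
Proof. rewrite /pscale /= scalerA; exact: equ_refl. Qed.

Lemma Escale1 p : equ (pscale 1 p) p.
Proof. rewrite /pscale scale1r; case: p => i x; exact: equ_refl. Qed.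

Lemma EscaleDr a p q : equ (pscale a (padd p q)) (padd (pscale a p) (pscale a q)).
Proof. rewrite /pscale /padd /= scalerDr !dlinZ; exact: equ_refl. Qed.

Lemma EscaleDl a b p : equ (pscale (a + b) p) (padd (pscale a p) (pscale b p)).
Proof.
apply: equ_sym; apply: equ_trans (@equ_add_any (pscale a p) (pscale b p) _ (Defs.cid (tag p)) (Defs.cid (tag p))) _.
rewrite !dmap_id /= -scalerDl; exact: equ_refl.
Qed.

Definition EM : lmodType R := QM equ_refl equ_sym equ_trans Eadd Eopp Escale
  EaddA EaddC Eadd0 EaddN EscaleA Escale1 EscaleDr EscaleDl.

Local Notation EP := (clsP equ_refl equ_sym equ_trans).

Definition eleg (i : C) (x : dobj D i) : EM := cls equ (mk x).

Lemma eleg_lin i : linear (@eleg i).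
Proof.
move=> c x y; rewrite /eleg clsZ clsD; apply/EP.
apply: equ_sym; apply: equ_trans (@equ_add_any (pscale c (mk x)) (mk y) _ (Defs.cid i) (Defs.cid i)) _.
rewrite !dmap_id; exact: equ_refl.
Qed.

Lemma eleg_comm i j (f : chom i j) (x : dobj D i) : eleg (dm f x) = eleg x.
Proof. apply/EP; apply: equ_sym; exact: equ_map. Qed.

Definition Ecocone : cocone D := Cocone eleg_lin eleg_comm.

Section ColimFacts.
Variables (K : cocone D) (Kc : is_colimit K).

Lemma colim_F2 i (x : dobj D i) : leg K x = 0 -> exists j (f : chom i j), dm f x = 0.
Proof.
move=> hx; case: (Kc Ecocone) => [[h [hl hK]] _].
have := hK i x; rewrite hx (lin0 hl) /= /eleg => /esym.
rewrite (cls0 (E := equ)) => /EP [k [f [g e]]].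
by exists k, f; rewrite e /= dlin0.
Qed.

Lemma leg_equ p q : equ p q -> leg K (tagged p) = leg K (tagged q).
Proof.
by case=> k [f [g e]]; rewrite -(leg_comm K f) -(leg_comm K g) e.
Qed.

Definition gK (q : EM) : apex K := leg K (tagged (rep q)).

Lemma gKE p : gK (cls equ p) = leg K (tagged p).
Proof. apply: leg_equ; exact: (repE equ_refl equ_sym equ_trans). Qed.

Lemma gK_lin : linear gK.
Proof.
move=> c; elim/cls_surj => p; elim/cls_surj => q.
rewrite clsZ clsD gKE /= (linD (@leg_lin _ _ _ K _)) !leg_comm (linZ (@leg_lin _ _ _ K _)).
by rewrite -gKE -gKE.
Qed.

Lemma colim_F1 (y : apex K) : exists i (x : dobj D i), y = leg K x.
Proof.
case: (Kc Ecocone) => [[h [hl hK]] _].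
case: (Kc K) => _ /(_ (fun z => gK (h z)) id) U.
exists (tag (rep (h y))), (tagged (rep (h y))).
rewrite -/(gK (h y)); symmetry; apply: U.
- by move=> c u v; rewrite hl gK_lin.
- by [].
- by move=> i x; rewrite hK /= /eleg gKE.
- by [].
Qed.

End ColimFacts.
End Filt.

Section Gen.
Variables (R : pzRingType) (C : Defs.cat) (hC : filtered C) (D : diagram R C).
Variables (K : cocone D) (Kc : is_colimit K).

Lemma F2_seq i (s : seq (dobj D i)) :
  (forall z, z \in s -> leg K z = 0) -> exists j (f : chom i j), forall z, z \in s -> dmap f z = 0.
Proof.
elim: s => [|z s IH] H.
  by exists i, (Defs.cid i).
case: IH => [w ws|j [f hf]]; first by apply: H; rewrite inE ws orbT.
have : leg K (dmap f z) = 0 by rewrite leg_comm; apply: H; rewrite inE eqxx.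
case/(colim_F2 hC Kc) => l [f2 e].
exists l, (ccomp f2 f) => w; rewrite inE => /orP [/eqP ->|ws].
  by rewrite dmap_comp.
by rewrite dmap_comp hf // (lin0 (dmap_lin _)).
Qed.

Variable (F : subfun R).
Hypothesis Hlift : forall i (x : dobj D i), F (apex K) (leg K x) ->
  exists j (f : chom i j), F (dobj D j) (dmap f x).

Lemma liftF (y : apex K) : F (apex K) y -> exists j (x : dobj D j), F _ x /\ leg K x = y.
Proof.
case: (colim_F1 hC Kc y) => i [x ->] /Hlift [j [f hf]].
by exists j, (dmap f x); split => //; rewrite leg_comm.
Qed.

Definition mkF j (x : dobj D j) (hx : F _ x) : sft F (dobj D j) := SFT (introT (pbP _) hx).

Lemma cup_ex (i j : C) : exists k (u : chom i k) (v : chom j k), True.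
Proof. by case: hC => _ h _; case: (h i j) => k [[u] [v]]; exists k, u, v. Qed.

Section WithK'.
Variable K' : cocone (sf_diagram F D).

Lemma legF_move i j (f : chom i j) (x : dobj D i) (hx : F _ x) (hx' : F _ (dmap f x)) :
  leg K' (mkF hx') = leg K' (mkF hx).
Proof.
rewrite -(leg_comm K' f); congr (leg K' _); exact: val_inj.
Qed.

Lemma WD i j (u : dobj D i) (v : dobj D j) (hu : F _ u) (hv : F _ v) :
  leg K u = leg K v -> leg K' (mkF hu) = leg K' (mkF hv).
Proof.
move=> e; case: (cup_ex i j) => k [f [g _]].
have : leg K (dmap f u - dmap g v) = 0.
  by rewrite (linD (@leg_lin _ _ _ K _)) (linN (@leg_lin _ _ _ K _)) !leg_comm e subrr.
case/(colim_F2 hC Kc) => l [w].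
rewrite (linD (dmap_lin _)) (linN (dmap_lin _)) => /eqP; rewrite subr_eq0 => /eqP e2.
have hu' : F _ (dmap (ccomp w f) u) by apply: (sf_map _ F _ _ _ (dmap_lin _)).
have hv' : F _ (dmap (ccomp w g) v) by apply: (sf_map _ F _ _ _ (dmap_lin _)).
rewrite -(legF_move hu hu') -(legF_move hv hv'); congr (leg K' _); apply: val_inj => /=.
by rewrite !dmap_comp.
Qed.

End WithK'.
End Gen.

Lemma filtered_commutes (R : pzRingType) (F : subfun R) :
  (forall (C : Defs.cat), filtered C -> forall (D : diagram R C) (K : cocone D), is_colimit K ->
     forall i (x : dobj D i), F (apex K) (leg K x) -> exists j (f : chom i j), F (dobj D j) (dmap f x)) ->
  commutes_with_filtered_colimits F.
Proof.
move=> HL C hC D K Kc K'.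
have Hl := HL C hC D K Kc.
have pick : forall y : sft F (apex K), {j : C & {x : dobj D j | F _ x /\ leg K x = sfval y}}.
  move=> y; have := liftF hC Kc Hl (elimT (pbP _) (sfvalP y)).
  move/constructive_indefinite_description => [j hj]; exists j.
  exact: constructive_indefinite_description.
pose h (y : sft F (apex K)) : apex K' :=
  match pick y with existT j (exist x hx) => leg K' (mkF (proj1 hx)) end.
have hE : forall y j (x : dobj D j) (hx : F _ x), leg K x = sfval y -> h y = leg K' (mkF hx).
  move=> y j x hx e; rewrite /h; case: (pick y) => j' [x' [hx' e']].
  by apply: (WD hC Kc); rewrite e e'.
have hF : forall y : sft F (apex K), exists j (x : dobj D j) (hx : F _ x), leg K x = sfval y.
  move=> y; case: (pick y) => j [x [hx e]]; by exists j, x, hx.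
split.
  exists h; split.
    move=> c y z.
    case: (hF y) => i [x [hx ex]]; case: (hF z) => j [u [hu eu]].
    case: (cup_ex hC i j) => k [f [g _]].
    have hx' : F _ (dmap f x) by apply: (sf_map _ F _ _ _ (dmap_lin _)).
    have hu' : F _ (dmap g u) by apply: (sf_map _ F _ _ _ (dmap_lin _)).
    have hs : F _ (c *: dmap f x + dmap g u).
      by apply: sf_add => //; apply: sf_scale.
    rewrite (hE _ _ _ hs); last first.
      by rewrite /= (linD (@leg_lin _ _ _ K _)) (linZ (@leg_lin _ _ _ K _)) !leg_comm ex eu.
    rewrite (hE y _ _ hx') ?leg_comm // (hE z _ _ hu') ?leg_comm //.
    rewrite -(linZ (@leg_lin _ _ _ K' _)) -(linD (@leg_lin _ _ _ K' _)).
    by congr (leg K' _); apply: val_inj.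
  move=> i s /=.
  have hs := elimT (pbP _) (sfvalP s).
  rewrite (hE _ _ _ hs) //; congr (leg K' _); exact: val_inj.
move=> h1 h2 l1 l2 e1 e2 y.
case: (hF y) => j [x [hx e]].
have -> : y = leg (sf_cocone F K) (mkF hx) by apply: val_inj; rewrite /= e.
by rewrite e1 e2.
Qed.

Section Full.
Variables (R : pzRingType) (F : subfun R).

Definition sinj (M : lmodType R) (H : forall x, F M x) (x : M) : sft F M :=
  @SFT _ F M x (introT (pbP _) (H x)).

Lemma sfval_lin (M : lmodType R) : linear (fun x : sft F M => sfval x).
Proof. by move=> c x y. Qed.

Lemma comp_lin (M N P : lmodType R) (f : M -> N) (g : N -> P) :
  linear f -> linear g -> linear (fun x => g (f x)).
Proof. by move=> fl gl c x y; rewrite fl gl. Qed.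

Lemma sinj_lin (M : lmodType R) H : linear (@sinj M H).
Proof. by move=> c x y; apply: val_inj. Qed.

Lemma full_commutes : (forall M x, F M x) -> commutes_with_colimits F.
Proof.
move=> HF C D K Kc K'.
pose L i (x : dobj D i) := leg K' (sinj (HF _) x).
have Ll : forall i, linear (@L i).
  by move=> i; exact: (comp_lin (@sinj_lin _ _) (@leg_lin _ _ _ K' i)).
have Lc : forall i j (f : chom i j) x, L j (dmap f x) = L i x.
  move=> i j f x; rewrite /L -(leg_comm K' f); congr (leg K' _); exact: val_inj.
pose K2 := Cocone Ll Lc.
case: (Kc K2) => [[h [hl hK]] huniq]; split.
  exists (fun y => h (sfval y)); split.
    exact: comp_lin (@sfval_lin _) hl.
  move=> i x /=; rewrite hK /K2 /= /L; congr (leg K' _); exact: val_inj.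
move=> h1 h2 l1 l2 e1 e2 y.
have -> : y = sinj (HF _) (sfval y) by apply: val_inj.
apply: (huniq (fun z => h1 (sinj (HF _) z)) (fun z => h2 (sinj (HF _) z))).
- exact: comp_lin (@sinj_lin _ _) l1.
- exact: comp_lin (@sinj_lin _ _) l2.
- move=> i x /=; rewrite /L -e1; congr h1; exact: val_inj.
- move=> i x /=; rewrite /L -e2; congr h2; exact: val_inj.
Qed.
End Full.

Lemma ideal_pow_pow (R : comPzRingType) (a : R -> Prop) r n :
  a r -> ideal_pow a n (r ^+ n).
Proof.
move=> ar; elim: n => [|n IH] //=.
exists [:: (r, r ^+ n)]; split; last by rewrite big_cons big_nil addr0 exprS.
by move=> p [<-|[]].
Qed.

Lemma ideal_pow1 (R : comPzRingType) (a : R -> Prop) r :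
  is_ideal a -> ideal_pow a 1 r <-> a r.
Proof.
case=> a0 aD aM; split.
  case=> s [hs ->]; elim: s hs => [|p s IH] hs; first by rewrite big_nil.
  rewrite big_cons; apply: aD; last by apply: IH => q hq; apply: hs; right.
  by case: (hs p (or_introl erefl)) => h1 _; rewrite mulrC; apply: aM.
move=> ar; exists [:: (r, 1)]; split; last by rewrite big_cons big_nil addr0 mulr1.
by move=> p [<-|[]].
Qed.

(* category with two objects and two parallel arrows *)
Definition chom2 (i j : bool) : Type :=
  match i, j with false, true => bool | true, false => Empty_set | _, _ => unit end.
Definition cid2 (i : bool) : chom2 i i := match i with false => tt | true => tt end.
Definition ccomp2 (i j k : bool) : chom2 j k -> chom2 i j -> chom2 i k :=
  match i as i, j as j, k as k return chom2 j k -> chom2 i j -> chom2 i k with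
  | false, false, false => fun _ _ => tt
  | false, false, true => fun g _ => g
  | false, true, true => fun _ f => f
  | true, true, true => fun _ _ => tt
  | false, true, false => fun g _ => match g with end
  | true, false, _ => fun _ f => match f with end
  | true, true, false => fun g _ => match g with end
  end.

Definition cat2 : Defs.cat.
Proof.
refine (@Cat bool chom2 cid2 ccomp2 _ _ _).
- by case; case => f; case: f.
- by case; case => f; case: f.
- by case; case; case; case => h g f; case: h; case: g; case: f.
Defined.

Definition Zo : lmodType int := GRing.regular int.
Definition Z2 : lmodType int := zmodule 'Z_2.

Definition dm2 (i j : bool) : chom2 i j -> Zo -> Zo :=
  match i as i, j as j return chom2 i j -> Zo -> Zo with
  | false, true => fun f x => if f then x * 2 else 0
  | _, _ => fun _ x => x end.

Definition D2 : diagram int cat2.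
Proof.
refine (@Diagram int cat2 (fun _ => Zo) dm2 _ _ _).
- move=> [] [] //= f c x y; case: f => //=; rewrite ?scaler0 ?addr0 //.
  by rewrite /GRing.scale /= mulrDl mulrA.
- by case.
- by move=> [] [] [] //= g f x; (try case: g); (try case: f).
Defined.

Definition lg2 (i : bool) (x : Zo) : Z2 := if i then (x%:~R : 'Z_2) else 0.

Lemma two0 : (2%:R : 'Z_2) = 0. Proof. exact: val_inj. Qed.

Definition K2 : cocone D2.
Proof.
refine (@Cocone int cat2 D2 Z2 lg2 _ _).
- move=> [] c x y /=; rewrite /lg2 ?scaler0 ?addr0 //.
  rewrite intrD; congr (_ + _); rewrite [c *: x]/(c * x) intrM mulrzl.
  by [].
- move=> [] [] //= f x; (try case: f) => //=; rewrite /lg2 //= ?intrM //.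
  by rewrite -[2%:~R]/(2%:R) two0 mulr0.
Defined.

Lemma Z2_cases (z : 'Z_2) : z = 0 \/ z = 1.
Proof.
case: z => [[|[|n]] Hn]; [left|right|]; try exact: val_inj.
by [].
Qed.

Lemma K2_colim : is_colimit K2.
Proof.
move=> K'.
set e := leg K' (i := true) 1.
have L1 : forall x : Zo, leg K' (i := true) x = x *: e.
  move=> x; have := linZ (@leg_lin _ _ _ K' true) x 1.
  by rewrite /e => <-; rewrite /GRing.scale /= mulr1.
have e2 : 2 *: e = 0 :> apex K'.
  have h1 := leg_comm K' (i := false) (j := true) true 1.
  have h2 := leg_comm K' (i := false) (j := true) false 1.
  rewrite /= mul1r in h1 h2; rewrite -L1 h1 -h2.
  exact: (lin0 (@leg_lin _ _ _ K' true)).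
have L0 : forall x : Zo, leg K' (i := false) x = 0.
  move=> x; have h2 := leg_comm K' (i := false) (j := true) false x.
  by rewrite /= in h2; rewrite -h2 (lin0 (@leg_lin _ _ _ K' true)).
pose h (z : Z2) : apex K' := if (z : 'Z_2) == 0 then 0 else e.
have hD : forall z w, h (z + w) = h z + h w.
  move=> z w; case: (Z2_cases z) => ->; case: (Z2_cases w) => ->;
  rewrite /h /= ?add0r ?addr0 //.
  by rewrite -e2 -[2%R]/(1 + 1)%R scalerDl scale1r.
have h0 : h 0 = 0 by rewrite /h; case: eqP => // [[]].
have hN : forall z, h (- z) = - h z.
  by move=> z; apply: (addrI (h z)); rewrite -hD !subrr h0.
have hMz : forall z (c : int), h (z *~ c) = h z *~ c.
  move=> z [] n.
    rewrite -!pmulrn; elim: n => [|n IH]; first by rewrite !mulr0n h0.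
    by rewrite !mulrS hD IH.
  rewrite !NegzE !mulrNz hN -!pmulrn; congr (- _).
  elim: n.+1 => [|m IH]; first by rewrite !mulr0n h0.
  by rewrite !mulrS hD IH.
have hZ : forall (c : int) z, h (c *: z) = c *: h z.
  by move=> c z; rewrite -[c in RHS]intz scaler_int; apply: hMz.
split.
  exists h; split.
    by move=> c x y; rewrite hD hZ.
  move=> [] x /=; rewrite ?L0 /lg2 ?eqxx //.
  rewrite L1 -[x in RHS]intz scaler_int.
  exact: (hMz 1 x).
move=> g g' gl gl' eg eg' z.
case: (Z2_cases z) => ->.
  by rewrite (lin0 gl) (lin0 gl').
have -> : (1 : 'Z_2) = lg2 true 1 by [].
by rewrite (eg true 1) (eg' true 1).
Qed.



Lemma Gamma_int0 (x : Zo) : Gamma two_Z x -> x = 0.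
Proof.
case=> n hn; have := hn (2 ^+ n) (@ideal_pow_pow _ two_Z 2 n (dvdzz 2)).
rewrite [_ *: _]/(_ * _) => /eqP; rewrite mulf_eq0 expf_eq0 /=.
by rewrite andbF orFb => /eqP.
Qed.

Lemma not_commutes_Z : ~ commutes_with_colimits (Gamma_sf two_Z_ideal).
Proof.
move=> H; have := H cat2 D2 K2 K2_colim.
pose F := Gamma_sf two_Z_ideal.
have l0 : forall i, linear (fun _ : sft F (dobj D2 i) => (0 : Z2)).
  by move=> i c x y; rewrite scaler0 addr0.
pose K' := @Cocone int cat2 (sf_diagram F D2) Z2 (fun i _ => 0) l0 (fun _ _ _ _ => erefl).
case/(_ K') => _ /(_ (fun _ => 0) (fun y => sfval y)) U.
have G1 : Gamma two_Z (1 : Z2).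
  exists 1%N => r /(ideal_pow1 _ two_Z_ideal) /dvdzP [k ->].
  change ((k * 2)%:~R = 0 :> 'Z_2).
  by rewrite intrM -[2%:~R]/(2%:R) two0 mulr0.
have U' := U _ _ _ _ (@SFT _ F Z2 1 (introT (pbP _) G1)).
have /(congr1 val) // : (0 : 'Z_2) = 1.
apply: U'.
- by move=> c x y; rewrite scaler0 addr0.
- by move=> c x y.
- by [].
- move=> [] x /=; rewrite /lg2 //.
  by rewrite (Gamma_int0 (elimT (pbP _) (sfvalP x))).
Qed.

Section Alg.
Variables (R : comPzRingType) (M : lmodType R).

Lemma expZ r k j (x : M) : r ^+ k *: x = 0 -> (k <= j)%N -> r ^+ j *: x = 0.
Proof. by move=> h /subnK <-; rewrite exprD -scalerA h scaler0. Qed.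

Lemma rad_add (u v : R) (x : M) p q :
  u ^+ p *: x = 0 -> v ^+ q *: x = 0 -> (u + v) ^+ (p + q) *: x = 0.
Proof.
move=> hu hv; rewrite exprDn scaler_suml big1 // => i _.
rewrite -scalerMnl; case: (leqP q i) => hi.
  by rewrite -scalerA (expZ hv hi) scaler0 mul0rn.
rewrite mulrC -scalerA (@expZ u p) ?scaler0 ?mul0rn //.
have := ltn_ord i; lia.
Qed.

Lemma rad_mul (s u : R) (x : M) p : u ^+ p *: x = 0 -> (s * u) ^+ p *: x = 0.
Proof. by move=> h; rewrite exprMn -scalerA h scaler0. Qed.

Lemma ideal_pow_single (b : R -> Prop) m s u :
  b s -> ideal_pow b m u -> ideal_pow b m.+1 (s * u).
Proof.
move=> bs hu; exists [:: (s, u)]; split; last by rewrite big_cons big_nil addr0.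
by move=> p [<-|[]].
Qed.

Lemma killS (b : R -> Prop) m (x : M) :
  (forall u v, b u -> ideal_pow b m v -> (u * v) *: x = 0) ->
  forall r, ideal_pow b m.+1 r -> r *: x = 0.
Proof.
move=> H r [s [hs ->]]; elim: s hs => [|p s IH] hs; first by rewrite big_nil scale0r.
rewrite big_cons scalerDl IH ?addr0; last by move=> q hq; apply: hs; right.
by case: (hs p (or_introl erefl)) => h1 h2; apply: H.
Qed.

Lemma Kp (a : R -> Prop) p : forall q (x : M),
  (forall u v, ideal_pow a p u -> ideal_pow a q v -> (u * v) *: x = 0) ->
  forall r, ideal_pow a (p + q) r -> r *: x = 0.
Proof.
elim: p => [|p IH] q x H r hr.
  by rewrite -[r]mul1r; apply: H.
rewrite addSn in hr; apply: (killS _ hr) => s t hs ht.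
rewrite mulrC -scalerA; apply: (IH q (s *: x)) => // u v hu hv.
rewrite scalerA; have -> : u * v * s = s * u * v by rewrite mulrC mulrA.
by apply: H => //; apply: ideal_pow_single.
Qed.

Lemma Kn (a : R -> Prop) n N : forall (x : M),
  (forall w, ideal_pow (ideal_pow a n) N w -> w *: x = 0) ->
  forall r, ideal_pow a (n * N) r -> r *: x = 0.
Proof.
elim: N => [|N IH] x H r hr.
  by have := H 1 I; rewrite scale1r => ->; rewrite scaler0.
rewrite mulnS in hr; apply: (Kp _ hr) => u v hu hv.
rewrite mulrC -scalerA; apply: (IH (u *: x)) => // w hw.
by rewrite scalerA mulrC; apply: H; apply: ideal_pow_single.
Qed.

Section Claim.
Variables (g0 : R) (I I' : R -> Prop).
Hypothesis Hdec : forall u, I u -> exists u' c, I' u' /\ u = u' + c * g0.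

Lemma Claim N : forall al be (x : M), (al + be <= N.+1)%N -> g0 ^+ al *: x = 0 ->
  (forall w, ideal_pow I' be w -> w *: x = 0) -> forall r, ideal_pow I N r -> r *: x = 0.
Proof.
elim: N => [|N IH] al be x hab hg hw r hr.
  case: al hg hab => [|al] hg hab; first by rewrite expr0 scale1r in hg; rewrite hg scaler0.
  case: be hw hab => [|be] hw hab; last by lia.
  by have := hw 1 Logic.I; rewrite scale1r => ->; rewrite scaler0.
case: al hg hab => [|al] hg hab; first by rewrite expr0 scale1r in hg; rewrite hg scaler0.
case: be hw hab => [|be] hw hab.
  by have := hw 1 Logic.I; rewrite scale1r => ->; rewrite scaler0.
apply: (killS _ hr) => u v /Hdec [u' [c [hu' ->]]] hv.
have h1 : (u' * v) *: x = 0.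
  rewrite mulrC -scalerA; apply: (IH al.+1 be (u' *: x)) => //; first by lia.
    by rewrite scalerA mulrC -scalerA hg scaler0.
  move=> w hw'; rewrite scalerA mulrC; apply: hw; exact: ideal_pow_single.
have h3 : v *: (g0 *: x) = 0.
  apply: (IH al be.+1 (g0 *: x) _ _ _ v hv).
  - lia.
  - by rewrite scalerA -exprSr.
  by move=> w hw'; rewrite scalerA mulrC -scalerA hw // scaler0.
have h2 : (c * g0 * v) *: x = 0.
  by rewrite -mulrA -scalerA mulrC -scalerA h3 scaler0.
by rewrite mulrDl scalerDl h1 h2 addr0.
Qed.

End Claim.

Lemma gen_ideal_ideal (g : seq R) : is_ideal (gen_ideal g).
Proof.
split.
- by exists (fun _ => 0); rewrite big1 // => i _; rewrite mul0r.
- move=> x y [c ->] [d ->]; exists (fun i => c i + d i).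
  by rewrite -big_split; apply: eq_bigr => i _; rewrite mulrDl.
- move=> r x [c ->]; exists (fun i => r * c i).
  by rewrite mulr_sumr; apply: eq_bigr => i _; rewrite mulrA.
Qed.

Lemma gen_nil (u : R) : gen_ideal [::] u -> u = 0.
Proof. by case=> c ->; rewrite big_ord0. Qed.

Lemma gen_cons g0 (g : seq R) u : gen_ideal (g0 :: g) u ->
  exists u' c, gen_ideal g u' /\ u = u' + c * g0.
Proof.
case=> c ->; exists (\sum_(i < size g) c (lift ord0 i) * g`_i), (c ord0); split.
  by exists (fun i => c (lift ord0 i)).
by rewrite big_ord_recl addrC.
Qed.

Lemma gen_mem (g : seq R) r : r \in g -> gen_ideal g r.
Proof.
elim: g => [//|g0 g IH]; rewrite inE => /orP [/eqP ->|hr].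
  exists (fun i => if unlift ord0 i is Some _ then 0 else 1).
  rewrite big_ord_recl unlift_none mul1r big1 ?addr0 // => i _.
  by rewrite liftK mul0r.
case: (IH hr) => c ->.
exists (fun i => if unlift ord0 i is Some j then c j else 0).
rewrite big_ord_recl unlift_none mul0r add0r; apply: eq_bigr => i _.
by rewrite liftK.
Qed.

Lemma FG (g : seq R) (x : M) : (forall r, r \in g -> exists k, r ^+ k *: x = 0) ->
  exists N, forall w, ideal_pow (gen_ideal g) N w -> w *: x = 0.
Proof.
elim: g => [|g0 g IH] H.
  exists 1%N => w /(ideal_pow1 _ (gen_ideal_ideal _)) /gen_nil ->.
  by rewrite scale0r.
case: IH => [r hr|N hN]; first by apply: H; rewrite inE hr orbT.
case: (H g0 (mem_head _ _)) => k hk.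
exists (k + N)%N => w hw.
by apply: (Claim (@gen_cons g0 g) (al := k) (be := N) _ hk hN hw).
Qed.

Lemma pow_rad (a : R -> Prop) n (x : M) :
  (forall r, a r -> exists k, r ^+ k *: x = 0) ->
  forall r, ideal_pow a n.+1 r -> exists k, r ^+ k *: x = 0.
Proof.
move=> H r [s [hs ->]]; elim: s hs => [|p s IH] hs.
  by exists 1%N; rewrite big_nil expr1 scale0r.
rewrite big_cons; case: IH => [q hq|k2 hk2]; first by apply: hs; right.
case: (hs p (or_introl erefl)) => /H [k1 hk1] _.
exists (k1 + k2)%N; apply: rad_add hk2; rewrite mulrC; exact: rad_mul.
Qed.

Section FGiff.
Variables (a : R -> Prop) (ha : is_ideal a) (n : nat) (g : seq R).
Hypothesis hn : (1 <= n)%N.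
Hypothesis hg : forall r, ideal_pow a n r <-> gen_ideal g r.

Lemma gen_in_a r : r \in g -> a r.
Proof.
move/gen_mem/hg => h; apply/(ideal_pow1 _ ha).
exact: (ideal_pow_le ha hn h).
Qed.

Lemma FG_Gamma (x : M) : (forall r, r \in g -> exists k, r ^+ k *: x = 0) -> Gamma a x.
Proof.
move/FG => [N hN]; exists (n * N)%N; apply: Kn.
have -> : ideal_pow a n = gen_ideal g by apply: funext => r; apply: propext.
exact: hN.
Qed.

Lemma Gamma_fin (x : M) : Gamma a x -> exists k, forall r, r \in g -> r ^+ k *: x = 0.
Proof.
case=> m hm; exists m => r /gen_in_a ar; apply: hm; exact: ideal_pow_pow.
Qed.

Lemma Gamma_bar (x : M) : Gamma a x <-> Gammabar a x.
Proof.
split.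
  by case=> m hm r ar; exists m; apply: hm; apply: ideal_pow_pow.
move=> hb; apply: FG_Gamma => r /gen_mem /hg.
case: n hn => [//|n'] _ hr; exact: (pow_rad hb hr).
Qed.
End FGiff.

End Alg.

Definition PR := forall n : nat, 'Z_(2 ^ n.+1).
HB.instance Definition _ := gen_eqMixin PR.
HB.instance Definition _ := gen_choiceMixin PR.

Definition padd' (f g : PR) : PR := fun n => f n + g n.
Definition popp' (f : PR) : PR := fun n => - f n.
Definition pz' : PR := fun n => 0.
Definition pmul' (f g : PR) : PR := fun n => f n * g n.
Definition pone' : PR := fun n => 1.

Ltac fext := apply: functional_extensionality_dep => ?.

Lemma paddA : associative padd'. Proof. by move=> f g h; fext; apply: addrA. Qed.
Lemma paddC : commutative padd'. Proof. by move=> f g; fext; apply: addrC. Qed.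
Lemma padd0 : left_id pz' padd'. Proof. by move=> f; fext; apply: add0r. Qed.
Lemma paddN : left_inverse pz' popp' padd'. Proof. by move=> f; fext; apply: addNr. Qed.
HB.instance Definition _ := GRing.isZmodule.Build PR paddA paddC padd0 paddN.
Lemma pmulA : associative pmul'. Proof. by move=> f g h; fext; apply: mulrA. Qed.
Lemma pmulC : commutative pmul'. Proof. by move=> f g; fext; apply: mulrC. Qed.
Lemma pmul1 : left_id pone' pmul'. Proof. by move=> f; fext; apply: mul1r. Qed.
Lemma pmulD : left_distributive pmul' padd'. Proof. by move=> f g h; fext; apply: mulrDl. Qed.
HB.instance Definition _ := GRing.Zmodule_isComPzRing.Build PR pmulA pmulC pmul1 pmulD.

Lemma PRaddE (f g : PR) n : (f + g) n = f n + g n. Proof. by []. Qed.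
Lemma PRmulE (f g : PR) n : (f * g) n = f n * g n. Proof. by []. Qed.
Lemma PRoppE (f : PR) n : (- f) n = - f n. Proof. by []. Qed.
Lemma PR0E n : (0 : PR) n = 0. Proof. by []. Qed.
Lemma PR1E n : (1 : PR) n = 1. Proof. by []. Qed.
Lemma PRexpE (f : PR) k n : (f ^+ k) n = f n ^+ k.
Proof. elim: k => [|k IH]; by rewrite ?expr0 // !exprS PRmulE IH. Qed.

Lemma two_pow0 n k : (n < k)%N -> (2%:R : 'Z_(2 ^ n.+1)) ^+ k = 0.
Proof.
move=> hk; rewrite -natrX; apply: val_inj => /=.
rewrite val_Zp_nat ?(ltn_exp2l 0) //; apply/eqP; rewrite -/(dvdn _ _).
by rewrite dvdn_exp2l.
Qed.

Lemma two_pow_neq0 n k : (k < n.+1)%N -> (2%:R : 'Z_(2 ^ n.+1)) ^+ k != 0.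
Proof.
move=> hk; rewrite -natrX; apply/eqP => /(congr1 val) /=.
rewrite val_Zp_nat ?(ltn_exp2l 0) // modn_small ?ltn_exp2l //.
by move/eqP; rewrite expn_eq0.
Qed.

Definition fin (p : PR) : Prop := exists N, forall m, (N <= m)%N -> p m = 0.
Lemma fin0 : fin 0. Proof. by exists 0%N. Qed.
Lemma finD p q : fin p -> fin q -> fin (p + q).
Proof.
case=> N hN [N' hN']; exists (maxn N N') => m hm.
by rewrite PRaddE hN ?hN' ?addr0 // (leq_trans _ hm) // ?leq_maxl ?leq_maxr.
Qed.
Lemma finM r p : fin p -> fin (r * p).
Proof. by case=> N hN; exists N => m hm; rewrite PRmulE hN ?mulr0. Qed.
Lemma finN p : fin p -> fin (- p).
Proof. by case=> N hN; exists N => m hm; rewrite PRoppE hN ?oppr0. Qed.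

Definition Efin (p q : PR) : Prop := fin (p - q).
Lemma Efin_refl p : Efin p p. Proof. by rewrite /Efin subrr; exact: fin0. Qed.
Lemma Efin_sym p q : Efin p q -> Efin q p.
Proof. by rewrite /Efin => /finN; rewrite opprB. Qed.
Lemma Efin_trans p q r : Efin p q -> Efin q r -> Efin p r.
Proof. by rewrite /Efin => h1 h2; have := finD h1 h2; rewrite addrA subrK. Qed.
Lemma Efin_add p p' q q' : Efin p p' -> Efin q q' -> Efin (p + q) (p' + q').
Proof.
rewrite /Efin => h1 h2; have := finD h1 h2.
by rewrite opprD addrACA.
Qed.
Lemma Efin_opp p p' : Efin p p' -> Efin (- p) (- p').
Proof. by rewrite /Efin => h; rewrite -opprD; apply: finN. Qed.
Lemma Efin_scale (c : PR) p p' : Efin p p' -> Efin (c * p) (c * p').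
Proof. by rewrite /Efin => h; rewrite -mulrBr; apply: finM. Qed.
Lemma Efin_eq p q : p = q -> Efin p q. Proof. by move=> ->; apply: Efin_refl. Qed.

Definition Rfin : lmodType PR := @QM PR PR Efin Efin_refl Efin_sym Efin_trans
  +%R (fun x => - x) *%R 0 Efin_add Efin_opp Efin_scale
  (fun p q r => Efin_eq (addrA p q r)) (fun p q => Efin_eq (addrC p q))
  (fun p => Efin_eq (add0r p)) (fun p => Efin_eq (addNr p))
  (fun a b p => Efin_eq (mulrA a b p)) (fun p => Efin_eq (mul1r p))
  (fun a p q => Efin_eq (mulrDr a p q)) (fun a b p => Efin_eq (mulrDl a b p)).

Definition clsf (p : PR) : Rfin := cls Efin p.
Lemma clsfP p q : clsf p = clsf q <-> fin (p - q).
Proof. exact: clsP Efin_refl Efin_sym Efin_trans p q. Qed.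
Lemma clsfD p q : clsf p + clsf q = clsf (p + q). Proof. exact: clsD. Qed.
Lemma clsfZ c p : c *: clsf p = clsf (c * p). Proof. exact: clsZ. Qed.
Lemma clsf0 : (0 : Rfin) = clsf 0. Proof. by []. Qed.
Lemma clsf_surj (P : Rfin -> Prop) : (forall x, P (clsf x)) -> forall q, P q.
Proof. exact: cls_surj. Qed.

Definition natcat : Defs.cat.
Proof.
refine (@Cat nat (fun i j => is_true (i <= j)%N) (fun i => leqnn i)
  (fun i j k g f => leq_trans f g) _ _ _); intros; exact: eq_irrelevance.
Defined.

Lemma natcat_filtered : filtered natcat.
Proof.
split.
- exact: (inhabits 0%N).
- move=> i j; exists (maxn i j); split; constructor; [exact: leq_maxl | exact: leq_maxr].
- move=> i j f g; exists j, (leqnn j); exact: eq_irrelevance.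
Qed.

Definition RO : lmodType PR := GRing.regular PR.

Section DSdef.
Variable i : nat.
Definition sdp : pred RO := fun x => pb (forall m, (m < i)%N -> (x : PR) m = 0).
Lemma sdp_closed : subsemimod_closed sdp.
Proof.
split; [split|].
- by apply/pbP => m _.
- by move=> x y /pbP hx /pbP hy; apply/pbP => m hm; rewrite PRaddE hx ?hy ?addr0.
- by move=> c x /pbP hx; apply/pbP => m hm; rewrite -[c *: x]/(c * (x : PR)) PRmulE hx ?mulr0.
Qed.
HB.instance Definition _ := GRing.isSubmodClosed.Build PR RO sdp sdp_closed.
Record DS := MkDS { dsval : RO; dsvalP : sdp dsval }.
HB.instance Definition _ := [isSub for dsval].
HB.instance Definition _ := [Choice of DS by <:].
HB.instance Definition _ := [SubChoice_isSubLmodule of DS by <:].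
End DSdef.

Definition vj (j : nat) : PR := fun m => if (j <= m)%N then 1 else 0.

Lemma dsv i (x : DS i) m : (m < i)%N -> (dsval x : PR) m = 0.
Proof. by move=> hm; have /pbP := dsvalP x; apply. Qed.

Definition dsmap (i j : nat) (f : (i <= j)%N) (x : DS i) : DS j.
Proof.
refine (@MkDS j ((dsval x : PR) * vj j) _).
by apply/pbP => m hm; rewrite PRmulE /vj leqNgt hm mulr0.
Defined.

Definition Dn : diagram PR natcat.
Proof.
refine (@Diagram PR natcat DS dsmap _ _ _).
- move=> i j f c x y; apply: val_inj => /=.
  change ((c * (dsval x : PR) + dsval y) * vj j = c * ((dsval x : PR) * vj j) + (dsval y : PR) * vj j).
  by rewrite mulrDl mulrA.
- move=> i x; apply: val_inj => /=; fext.
  rewrite PRmulE /vj; case: leqP => h; first by rewrite mulr1.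
  by rewrite dsv // mulr0.
- move=> i j k g f x; apply: val_inj => /=; fext.
  rewrite !PRmulE /vj; case: (leqP k _) => hk; first by rewrite (leq_trans g hk) !mulr1.
  by rewrite !mulr0.
Defined.

Lemma lgf_lin i : linear (fun x : DS i => clsf (dsval x : PR)).
Proof. by move=> c x y; rewrite clsfZ clsfD. Qed.

Lemma lgf_comm i j (f : chom (c:=natcat) i j) (x : DS i) :
  clsf (dsval (dmap (d:=Dn) f x) : PR) = clsf (dsval x : PR).
Proof.
apply/clsfP; exists j => m hm; rewrite /= PRaddE PRoppE PRmulE /vj hm mulr1 subrr //.
Qed.

Definition Kcn : cocone Dn :=
  @Cocone PR natcat Dn Rfin (fun i (x : DS i) => clsf (dsval x : PR)) lgf_lin lgf_comm.

Lemma comp_lin2 (R : pzRingType) (M N P : lmodType R) (f : M -> N) (g : N -> P) :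
  linear f -> linear g -> linear (fun x => g (f x)).
Proof. by move=> fl gl c x y; rewrite fl gl. Qed.

Definition emb0 (p : RO) : DS 0.
Proof. by refine (@MkDS 0 p _); apply/pbP. Defined.

Lemma emb0_lin : linear emb0.
Proof. by move=> c x y; apply: val_inj. Qed.

Lemma Kcn_colim : is_colimit Kcn.
Proof.
move=> K'.
pose L0 (p : RO) : apex K' := leg K' (emb0 p).
have L0l : linear L0 := comp_lin2 emb0_lin (@leg_lin _ _ _ K' 0%N).
have Lfin : forall p : RO, fin p -> L0 p = 0.
  move=> p [N hN]; rewrite /L0 -(leg_comm K' (isT : (0 <= N)%N)).
  have -> : dmap (d:=Dn) (isT : (0 <= N)%N) (emb0 p) = 0.
    apply: val_inj => /=; fext; rewrite PRmulE /vj; case: leqP => h.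
      by rewrite hN // mulr1.
    by rewrite mulr0.
  exact: (lin0 (@leg_lin _ _ _ K' N)).
have WD : forall p q : RO, fin (p - q) -> L0 p = L0 q.
  move=> p q h; apply/eqP; rewrite -subr_eq0 -(linN L0l) -(linD L0l).
  by rewrite (Lfin _ h).
pose h (q : Rfin) : apex K' := L0 (rep q).
have hE : forall p, h (clsf p) = L0 p.
  move=> p; apply: WD; exact: (repE Efin_refl Efin_sym Efin_trans).
have Lleg : forall i (x : DS i), L0 (dsval x) = leg K' x.
  move=> i x; rewrite /L0 -(leg_comm K' (isT : (0 <= i)%N)); congr (leg K' _).
  apply: val_inj => /=; fext; rewrite PRmulE /vj; case: leqP => hm; first by rewrite mulr1.
  by rewrite dsv // mulr0.
split.
  exists h; split.
    move=> c; elim/clsf_surj => p; elim/clsf_surj => q.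
    by rewrite clsfZ clsfD !hE -[c * p]/(c *: (p : RO)) L0l.
  by move=> i x /=; rewrite hE Lleg.
move=> h1 h2 l1 l2 e1 e2; elim/clsf_surj => p.
have := e1 0%N (emb0 p); have := e2 0%N (emb0 p); rewrite /= => -> -> //.
Qed.

Definition aN (r : PR) : Prop := fin r /\ forall m, exists t, r m = 2%:R * t.

Lemma aN_ideal : is_ideal aN.
Proof.
split.
- by split; [exact: fin0 | move=> m; exists 0; rewrite mulr0].
- move=> x y [fx ex] [fy ey]; split; first exact: finD.
  by move=> m; case: (ex m) => t ht; case: (ey m) => u hu; exists (t + u); rewrite PRaddE ht hu mulrDr.
- move=> r x [fx ex]; split; first exact: finM.
  by move=> m; case: (ex m) => t ht; exists (r m * t); rewrite PRmulE ht mulrCA.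
Qed.

Lemma aN_nil : nil_ideal aN.
Proof.
move=> r [[N hN] ev]; exists N.+1; apply: functional_extensionality_dep => x.
rewrite PRexpE PR0E.
case: (leqP N x) => hx; first by rewrite hN // expr0n.
case: (ev x) => t ->; rewrite exprMn two_pow0 ?mul0r //.
exact: ltnW hx.
Qed.

Definition e2 (m : nat) : PR := fun n => if n == m then 2%:R else 0.

Lemma e2_in m : aN (e2 m).
Proof.
split; first by exists m.+1 => n hn; rewrite /e2; case: eqP => // e; rewrite e ltnn in hn.
move=> n; rewrite /e2; case: eqP => _; first by exists 1; rewrite mulr1.
by exists 0; rewrite mulr0.
Qed.

Lemma not_commute_aN : ~ commutes_with_filtered_colimits (Gamma_sf aN_ideal).
Proof.
move=> H; have Kc := H natcat natcat_filtered Dn Kcn Kcn_colim.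
have G1 : Gamma aN (clsf 1).
  exists 1%N => r /(ideal_pow1 _ aN_ideal) [fr _].
  by rewrite clsfZ mulr1 clsf0; apply/clsfP; rewrite subr0.
have := colim_F1 natcat_filtered Kc (@SFT _ (Gamma_sf aN_ideal) Rfin (clsf 1) (introT (pbP _) G1)).
case=> i [s /(congr1 (fun z => sfval z)) /=] /clsfP [N hN].
have /pbP [k hk] := sfvalP s.
pose m := maxn N k.
have := hk _ (ideal_pow_pow k (e2_in m)).
move/(congr1 (fun z => (dsval z : PR) m)) => /=.
rewrite -[_ *: dsval _]/(_ * (dsval (sfval s) : PR)) PRmulE PRexpE /e2 eqxx.
have -> : (dsval (sfval s) : PR) m = 1.
  have := hN m (leq_maxl _ _); rewrite PRaddE PRoppE PR1E => /eqP.
  by rewrite subr_eq0 => /eqP <-.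
rewrite mulr1 PR0E => /eqP; apply/negP; apply: two_pow_neq0.
by rewrite ltnS leq_maxr.
Qed.

Lemma part_c (R : comPzRingType) (a : R -> Prop) (ha : is_ideal a) :
  (exists n : nat, (1 <= n)%N /\ finitely_generated (ideal_pow a n)) ->
  (forall (M : lmodType R) (x : M), Gamma a x <-> Gammabar a x) /\
  commutes_with_filtered_colimits (Gamma_sf ha).
Proof.
case=> n [hn [g hg]]; split; first by move=> M x; exact: (Gamma_bar hn hg).
apply: filtered_commutes => C hC D K Kc i x /= hx.
case: (Gamma_fin ha hn hg hx) => k hk.
case: (@F2_seq _ _ hC D K Kc i [seq r ^+ k *: x | r <- g]).
  move=> z /mapP [r hr ->]; rewrite (linZ (@leg_lin _ _ _ K _)); exact: hk.
move=> j [f hf]; exists j, f; apply: (FG_Gamma hg) => r hr.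
exists k; rewrite -(linZ (dmap_lin f)); apply: hf; exact: map_f.
Qed.

Lemma Gamma_Gammabar (R : comPzRingType) (a : R -> Prop) (M : lmodType R) (x : M) :
  Gamma a x -> Gammabar a x.
Proof. by case=> m hm r ar; exists m; apply: hm; apply: ideal_pow_pow. Qed.

Lemma fg_two : finitely_generated (ideal_pow two_Z 1).
Proof.
exists [:: 2] => r; rewrite (ideal_pow1 _ two_Z_ideal); split.
  by case/dvdzP => k ->; exists (fun _ => k); rewrite big_ord1.
by case=> c ->; rewrite big_ord1 /two_Z dvdz_mull.
Qed.

Theorem proposition9p6 :
  (* (a) a nilpotent *)
  (forall (R : comPzRingType) (a : R -> Prop) (ha : is_ideal a),
     nilpotent_ideal a ->
     (forall (M : lmodType R) (x : M), Gamma a x <-> Gammabar a x) /\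
     commutes_with_colimits (Gamma_sf ha)) /\
  (* (b) a nil *)
  ((forall (R : comPzRingType) (a : R -> Prop), is_ideal a -> nil_ideal a ->
      commutes_with_colimits (Gammabar_sf a)) /\
   (exists (R : comPzRingType) (a : R -> Prop) (ha : is_ideal a),
      nil_ideal a /\ ~ commutes_with_filtered_colimits (Gamma_sf ha))) /\
  (* (c) some power a^n, n >= 1, finitely generated *)
  (forall (R : comPzRingType) (a : R -> Prop) (ha : is_ideal a),
     (exists n : nat, (1 <= n)%N /\ finitely_generated (ideal_pow a n)) ->
     (forall (M : lmodType R) (x : M), Gamma a x <-> Gammabar a x) /\
     commutes_with_filtered_colimits (Gamma_sf ha)) /\
  (* (d) R noetherian; counterexample R = Z, a = 2Z for arbitrary colimits *)
  ((forall (R : comPzRingType) (a : R -> Prop) (ha : is_ideal a),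
      noetherian R ->
      (forall (M : lmodType R) (x : M), Gamma a x <-> Gammabar a x) /\
      commutes_with_filtered_colimits (Gamma_sf ha)) /\
   (forall (M : lmodType int) (x : M), Gamma two_Z x <-> Gammabar two_Z x) /\
   ~ commutes_with_colimits (Gamma_sf two_Z_ideal)).
Proof.
split.
  move=> R a ha [n hn].
  have all : forall (M : lmodType R) (x : M), Gamma a x.
    by move=> M x; exists n => r hr; rewrite (hn r hr) scale0r.
  split; first by move=> M x; split => [h|_]; [exact: Gamma_Gammabar | exact: all].
  by apply: full_commutes => M x; exact: all.
split.
  split.
    move=> R a ha hnil; apply: full_commutes => M x r ar.
    by case: (hnil r ar) => k hk; exists k; rewrite hk scale0r.
  by exists PR, aN, aN_ideal; split; [exact: aN_nil | exact: not_commute_aN].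
split; first exact: part_c.
split.
  move=> R a ha hno; apply: part_c; exists 1%N; split => //.
  exact: hno _ (ideal_pow_ideal ha 1).
split; last exact: not_commutes_Z.
by move=> M x; apply: (proj1 (part_c two_Z_ideal _)); exists 1%N; split => //; exact: fg_two.
Qed.
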